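(* The set $\mathcal A_1$ with the operation $\circ$ is a non-Abelian semigroup. That is: (i) if $\mathbf a,\mathbf b\in\mathcal A_1$, then $\mathbf a\circ\mathbf b\in\mathcal A_1$; (ii) for all $\mathbf a,\mathbf b,\mathbf c\in\mathcal A_1$, $(\mathbf a\circ\mathbf b)\circ\mathbf c=\mathbf a\circ(\mathbf b\circ\mathbf c)$; and the operation is not commutative.
   Context: Binary words are ordered lexicographically, with $\mathbf c\prec\mathbf d$ iff $\mathbf c0^\infty\prec\mathbf d0^\infty$. Word operations. For a binary word $c_1\dots c_k$: - if $c_k=0$, then $c_1\dots c_k^+=c_1\dots c_{k-1}1$; - the reflection is $\overline{c_1\dots c_k}=(1-c_1)\dots(1-c_k)$. Fundamental words. A binary word $a_1\dots a_m$ with $m\ge2$ is fundamental if $\overline{a_1\dots a_{m-i}}\preceq a_{i+1}\dots a_m\prec a_1\dots a_{m-i}$ for all $1\le i<m$. $\mathcal A_1$ is the set of such words; they all begin with $1$. The graph. For $\mathbf a\in\mathcal A_1$, let $G$ have vertices Start, $A$, $B$ and edges - $e_0$: Start$\to A$, - $e_1$: $A\to B$, - $e_2$: $B\to B$, - $e_3$: $B\to A$, - $e_4$: $A\to A$. It carries two labelings: - $\mathcal L_{\mathbf a}$: $e_0,e_3\mapsto\mathbf a^+$; $e_1\mapsto\overline{\mathbf a^+}$; $e_2\mapsto\mathbf a$; $e_4\mapsto\overline{\mathbf a}$; - $\mathcal L^*$: $e_0,e_3,e_4\mapsto1$; $e_1,e_2\mapsto0$. The map $\Phi_{\mathbf a}$.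 For a path $e_{i_1}\dots e_{i_k}$ with $i_1=0$, set $\Phi_{\mathbf a}(\mathcal L_{\mathbf a}(e_{i_1})\cdots\mathcal L_{\mathbf a}(e_{i_k}))=\mathcal L^*(e_{i_1}\dots e_{i_k})$. This is a bijection from such block words onto binary words beginning with $1$. Composition. $\mathbf a\circ\mathbf b:=\Phi_{\mathbf a}^{-1}(\mathbf b)$, a word of length $|\mathbf a||\mathbf b|$. For example, $10\circ110=110100$ while $110\circ10=111000$. *)

(* Defs.v *)
From mathcomp Require Import all_boot.
Set Implicit Arguments. Unset Strict Implicit. Unset Printing Implicit Defensive.

(* Binary words: seq bool, with true = 1 and false = 0. *)
Definition word := seq bool.

Definition pad (n : nat) (c : word) : word := c ++ nseq (n - size c) false.

Fixpoint lexlt_eq (c d : word) : bool :=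
  match c, d with
  | x :: c', y :: d' => (~~ x && y) || ((x == y) && lexlt_eq c' d')
  | _, _ => false
  end.

(* c < d  iff  c0^oo < d0^oo  (compare after padding to common length). *)
Definition wlt (c d : word) : bool :=
  let n := maxn (size c) (size d) in lexlt_eq (pad n c) (pad n d).
Definition wle (c d : word) : bool :=
  let n := maxn (size c) (size d) in (pad n c == pad n d) || wlt c d.

(* c^+ : if c ends with 0, replace that last 0 by 1 (otherwise unchanged;
   only used on words ending with 0). *)
Definition wplus (c : word) : word :=
  match rev c with
  | false :: r => rev (true :: r)
  | _ => c
  end.

Definition wrefl (c : word) : word := map negb c.

(* Fundamental words, the set A_1. *)
Definition fundamental (a : word) : bool :=
  (2 <= size a) &&
  all (fun i => wle (wrefl (take (size a - i) a)) (drop i a) &&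
                 wlt (drop i a) (take (size a - i) a))
      (iota 1 (size a).-1).

Inductive vertex := VStart | VA | VB.
Inductive edge := e0 | e1 | e2 | e3 | e4.

Definition esrc (e : edge) : vertex :=
  match e with e0 => VStart | e1 => VA | e2 => VB | e3 => VB | e4 => VA end.
Definition etgt (e : edge) : vertex :=
  match e with e0 => VA | e1 => VB | e2 => VB | e3 => VA | e4 => VA end.

Definition vertex_eqb (u v : vertex) : bool :=
  match u, v with
  | VStart, VStart | VA, VA | VB, VB => true
  | _, _ => false
  end.

Fixpoint chain (v : vertex) (p : seq edge) : bool :=
  match p with
  | [::] => true
  | e :: p' => vertex_eqb (esrc e) v && chain (etgt e) p'
  end.
Definition is_path0 (p : seq edge) : bool :=
  match p with
  | e0 :: p' => chain VA p'
  | _ => false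
  end.

Definition La (a : word) (e : edge) : word :=
  match e with
  | e0 | e3 => wplus a
  | e1 => wrefl (wplus a)
  | e2 => a
  | e4 => wrefl a
  end.
Definition Lstar (e : edge) : bool :=
  match e with e0 | e3 | e4 => true | e1 | e2 => false end.

Definition La_path (a : word) (p : seq edge) : word := flatten (map (La a) p).
Definition Lstar_path (p : seq edge) : word := map Lstar p.

(* Inverse of L^* on paths starting with e0: from each vertex A, B the
   outgoing edges have distinct L^*-labels, so the path is determined. *)
Fixpoint path_from (v : vertex) (b : word) : seq edge :=
  match b with
  | [::] => [::]
  | x :: b' =>
      match v, x with
      | VA, true => e4 :: path_from VA b'
      | VA, false => e1 :: path_from VB b'
      | VB, false => e2 :: path_from VB b'
      | _, _ => e3 :: path_from VA b'
      end
  end.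
Definition path_of (b : word) : seq edge :=
  match b with
  | [::] => [::]
  | _ :: b' => e0 :: path_from VA b'
  end.

(* Phi_a^{-1}(b) = L_a(path) where path is the unique path from Start with
   L^*(path) = b; composition a o b := Phi_a^{-1}(b). *)
Definition wcomp (a b : word) : word := La_path a (path_of b).

(* Main.v *)
Require Import Defs.
From mathcomp Require Import all_boot zify.
Set Implicit Arguments. Unset Strict Implicit. Unset Printing Implicit Defensive.

Notation llt := lexlt_eq.
Definition lle (u v : word) := (u == v) || llt u v.
Notation r := (map negb).

Lemma lt_irr u : llt u u = false.
Proof. by elim: u => [|x u IH] //=; rewrite IH eqxx; case: x. Qed.

Lemma lt_cat u v u' v' : size u = size v ->
  llt (u ++ u') (v ++ v') = llt u v || (u == v) && llt u' v'.
Proof.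
elim: u v => [|x u IH] [|y v] //= [] /IH ->.
by case: x; case: y => //=; rewrite ?andbF ?orbF.
Qed.

Lemma lt_r u v : size u = size v -> llt (r u) (r v) = llt v u.
Proof.
elim: u v => [|x u IH] [|y v] //= [] /IH ->.
by case: x; case: y.
Qed.

Lemma lt_trans u v w : llt u v -> llt v w -> llt u w.
Proof.
elim: u v w => [|x u IH] [|y v] [|z w] //=.
by case: x; case: y; case: z => //=; eauto.
Qed.

Lemma le_lt_trans u v w : lle u v -> llt v w -> llt u w.
Proof. by case/orP => [/eqP->//|]; apply: lt_trans. Qed.
Lemma lt_le_trans u v w : llt u v -> lle v w -> llt u w.
Proof. by move=> h; case/orP => [/eqP<-//|]; apply: lt_trans. Qed.

Lemma le_r u v : size u = size v -> lle (r u) (r v) = lle v u.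
Proof.
move=> e; rewrite /lle lt_r // (inj_eq (inj_map negb_inj)).
by rewrite eq_sym.
Qed.

Lemma lt01 s : llt (s ++ [:: false]) (s ++ [:: true]).
Proof. by rewrite lt_cat // lt_irr eqxx. Qed.

Lemma lt_le01 s t e : size s = size t ->
  llt (s ++ [:: false]) (t ++ [:: e]) -> lle (s ++ [:: true]) (t ++ [:: e]).
Proof.
move=> h; rewrite /lle !lt_cat //; case/orP => [->|/andP[/eqP-> ]]; first by rewrite orbT.
by case: e => // _; rewrite eqxx.
Qed.

Fixpoint go (a' : word) (p : bool) (c : word) : word :=
  match c with
  | [::] => [::]
  | x :: c' => map (xorb p) a' ++ x :: go a' x c'
  end.

Lemma map_xorF (w : word) : map (xorb false) w = w.
Proof. by elim: w => //= x w ->. Qed.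
Lemma map_xorT (w : word) : map (xorb true) w = r w.
Proof. by []. Qed.

Lemma path_from_go a' p b :
  flatten (map (La (rcons a' false)) (path_from (if p then VA else VB) b)) =
  go a' p b.
Proof.
have hp : wplus (rcons a' false) = rcons a' true.
  by rewrite /wplus rev_rcons rev_cons revK.
elim: b p => [|x b IH] [|] //=; case: x => /=; rewrite ?(IH true) ?(IH false) /=.
all: try rewrite hp. all: rewrite ?map_xorF /wrefl ?map_rcons -?cats1 -?catA //.
Qed.

Lemma wcomp_go a' b2 :
  wcomp (rcons a' false) (true :: b2) = go a' false (true :: b2).
Proof.
rewrite /wcomp /La_path /=.
have hp : wplus (rcons a' false) = rcons a' true.
  by rewrite /wplus rev_rcons rev_cons revK.
by rewrite hp (path_from_go a' true) map_xorF -cats1 -catA.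
Qed.

Lemma go_cat a' p w w' : go a' p (w ++ w') = go a' p w ++ go a' (last p w) w'.
Proof. by elim: w p => //= x w IH p; rewrite IH -catA. Qed.

Lemma go_xor a' s p w : go a' (xorb s p) (map (xorb s) w) = map (xorb s) (go a' p w).
Proof.
elim: w p => //= x w IH p; rewrite IH map_cat /= -map_comp.
congr (_ ++ _); apply: eq_map => y /=; by case: (s); case: (p); case: y.
Qed.

Lemma last_go a' p c : last p (go a' p c) = last p c.
Proof. by elim: c p => //= x c IH p; rewrite last_cat /= IH. Qed.

Lemma go_assoc a' b' q c :
  go a' q (go b' q c) = go (go a' false b' ++ map (xorb (last false b')) a') q c.
Proof.
elim: c q => //= x c IH q.
rewrite go_cat /= -IH map_cat -catA -map_comp.
have e1 : go a' q (map (xorb q) b') = map (xorb q) (go a' false b').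
  by rewrite -go_xor; case: q.
rewrite e1; congr (_ ++ _); congr (_ ++ _).
have -> : last q (map (xorb q) b') = xorb q (last false b').
  by rewrite -(last_map (xorb q) b' false); case: (q).
apply: eq_map => y /=.
by case: (q); case: (last false b'); case: y.
Qed.

Lemma pad_id n c : size c = n -> pad n c = c.
Proof. by move=> <-; rewrite /pad subnn cats0. Qed.

Lemma wlt_eq u v : size u = size v -> wlt u v = llt u v.
Proof. by move=> e; rewrite /wlt e maxnn !pad_id. Qed.
Lemma wle_eq u v : size u = size v -> wle u v = lle u v.
Proof. by move=> e; rewrite /wle /lle -/(wlt u v) wlt_eq // e maxnn !pad_id. Qed.

Definition Cond (a : word) i :=
  llt (drop i a) (take (size a - i) a) && lle (r (take (size a - i) a)) (drop i a).

Lemma fundE a : fundamental a = (2 <= size a) && [forall i : 'I_(size a), (0 < i) ==> Cond a i].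
Proof.
rewrite /fundamental; congr (_ && _).
have sz i : size (r (take (size a - i) a)) = size (drop i a).
  by rewrite size_map size_take size_drop; case: ltnP => //; lia.
have sz' i : size (drop i a) = size (take (size a - i) a).
  by rewrite size_take size_drop; case: ltnP => //; lia.
apply/allP/forallP => [h [k hk]|h i].
  apply/implyP => /= hi; have /h : k \in iota 1 (size a).-1.
    by rewrite mem_iota -subn1; lia.
  by rewrite wle_eq // wlt_eq // /Cond andbC.
rewrite mem_iota -subn1 => hi.
have hi' : i < size a by lia.
have := h (Ordinal hi'); rewrite /= /Cond; have -> : 0 < i by lia.
by rewrite /= wle_eq // wlt_eq // andbC.
Qed.

Lemma fundP a : fundamental a -> 2 <= size a /\ forall i, 0 < i < size a -> Cond a i.
Proof.
rewrite fundE => /andP[-> /forallP h]; split => // i /andP[i0 ia].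
by have := h (Ordinal ia); rewrite /= i0.
Qed.

Lemma fundI a : 2 <= size a -> (forall i, 0 < i < size a -> Cond a i) -> fundamental a.
Proof.
move=> h1 h2; rewrite fundE h1 /=; apply/forallP => i; apply/implyP => i0.
by apply: h2; rewrite i0 ltn_ord.
Qed.

Lemma fund_shape a : fundamental a ->
  exists a' t, a = rcons a' false /\ a' = true :: t.
Proof.
move/fundP => [h2 h].
have := h (size a).-1; rewrite /Cond.
case/lastP: a h2 h => [|a' l] //=; rewrite size_rcons => h2 h.
case: a' h2 h => [|x t] //= h2 h; rewrite subSn ?subnn ?leqnn // => /=.
rewrite drop_rcons ?size_rcons // drop_size /= => /(_ isT) /andP[].
by case: (l); case: (x) => //= _ _; exists (true :: t), t.
Qed.

Lemma go_rcons0 a' b' : go a' false (rcons b' false) =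
  rcons (go a' false b' ++ map (xorb (last false b')) a') false.
Proof. by rewrite -cats1 go_cat /= cats1 -rcons_cat. Qed.

Lemma assoc_part a b c : fundamental a -> fundamental b -> fundamental c ->
  wcomp (wcomp a b) c = wcomp a (wcomp b c).
Proof.
move=> /fund_shape [a' [ta [-> ea]]] /fund_shape [b' [tb [-> eb]]]
  /fund_shape [c' [tc [-> ec]]].
have hc : rcons c' false = true :: rcons tc false by rewrite ec.
have hb : rcons b' false = true :: rcons tb false by rewrite eb.
rewrite hc hb !wcomp_go -hb go_rcons0.
set X := go a' false b' ++ _.
have [tX eX] : exists tX, X = true :: tX.
  by rewrite /X eb ea /=; eexists.
have [tY eY] : exists tY, go b' false (true :: rcons tc false) = true :: tY.
  by rewrite eb /=; eexists.
rewrite eX wcomp_go -eX wcomp_go eY wcomp_go -eY go_assoc //.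
Qed.

Lemma noncomm : exists a b : word, fundamental a /\ fundamental b /\ wcomp a b <> wcomp b a.
Proof. by exists [:: true; false], [:: true; true; false]. Qed.

Lemma rK (w : word) : r (r w) = w.
Proof. by rewrite -map_comp; elim: w => //= x w ->; rewrite negbK. Qed.

Lemma map_xor (p : bool) w : map (xorb p) w = if p then r w else w.
Proof. by case: p; rewrite ?map_xorF. Qed.

Lemma two_step A Tb B C R1 R2 : size A = size Tb -> size B = size C ->
  llt A Tb || (A == Tb) && llt B C -> llt (A ++ B ++ R1) (Tb ++ C ++ R2).
Proof.
move=> h1 h2 h; rewrite lt_cat //; case/orP: h => [->//|/andP[-> h]].
by rewrite lt_cat // h orbT.
Qed.

Lemma key_L2 p u1 s t e s' T2 R1 R2 :
  size t = size s -> size T2 = (size s').+1 ->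
  llt (s ++ [:: false]) (t ++ [:: e]) -> lle (r (t ++ [:: e])) (s ++ [:: false]) ->
  lle (r T2) (s' ++ [:: false]) ->
  llt (map (xorb p) s ++ u1 :: map (xorb u1) T2 ++ R1) ((t ++ [:: e]) ++ (s' ++ [:: true]) ++ R2)
  && llt (r ((t ++ [:: e]) ++ (s' ++ [:: true]) ++ R2)) (map (xorb p) s ++ u1 :: map (xorb u1) T2 ++ R1).
Proof.
move=> st sT H1 H2 H4.
have sz1 : size (s' ++ [:: true]) = size T2 by rewrite size_cat addn1.
have N1 : llt (r (s' ++ [:: true])) T2.
  apply: (lt_le_trans (v := r (s' ++ [:: false]))).
    by rewrite lt_r ?lt01 // !size_cat.
  by rewrite -(rK T2) le_r ?size_map // size_cat addn1.
have N2 : llt (r T2) (s' ++ [:: true]) by apply: le_lt_trans H4 (lt01 _).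
have E : forall X, map (xorb p) s ++ u1 :: X = (map (xorb p) s ++ [:: u1]) ++ X.
  by move=> X; rewrite -catA.
have szA : size (map (xorb p) s ++ [:: u1]) = size (t ++ [:: e]) by rewrite !size_cat size_map st.
rewrite E !map_cat; clear E szA; apply/andP; split; apply: two_step.
all: rewrite ?size_cat ?size_map ?st ?sT ?addn1 //.
- case: p; case: u1; rewrite /= ?map_xorF ?map_xorT.
  + have h2 : lle (r (s ++ [:: false])) (t ++ [:: e]).
      by rewrite -(rK (t ++ _)) le_r ?size_map // !size_cat st.
    rewrite !map_cat /= in h2; case/orP: h2 => [/eqP->|->//]; by rewrite eqxx; move: N1 N2; rewrite !map_cat /= => n1 n2; rewrite ?n1 ?n2 ?orbT.
  + have h1 : llt (r (s ++ [:: true])) (t ++ [:: e]).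
      apply: (lt_le_trans (v := r (s ++ [:: false]))).
        by rewrite lt_r ?lt01 // !size_cat.
      by rewrite -(rK (t ++ _)) le_r ?size_map // !size_cat st.
    by rewrite !map_cat /= in h1; rewrite h1.
  + case/orP: (lt_le01 (esym st) H1) => [/eqP->|->//]; by rewrite eqxx; move: N1 N2; rewrite !map_cat /= => n1 n2; rewrite ?n1 ?n2 ?orbT.
  + by rewrite H1.
- case: p; case: u1; rewrite /= ?map_xorF ?map_xorT.
  + have h1 : llt (r (t ++ [:: e])) (r (s ++ [:: false])) by rewrite lt_r // !size_cat st.
    by rewrite !map_cat /= in h1; rewrite h1.
  + have h2 : lle (r (t ++ [:: e])) (r (s ++ [:: true])).
      by rewrite le_r ?lt_le01 // !size_cat st.
    rewrite !map_cat /= in h2.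
    case/orP: h2 => [/eqP->|->//]; by rewrite eqxx; move: N1 N2; rewrite !map_cat /= => n1 n2; rewrite ?n1 ?n2 ?orbT.
  + have h3 := le_lt_trans H2 (lt01 _); rewrite !map_cat /= in h3 *; by rewrite h3.
  + rewrite !map_cat /= in H2 *; case/orP: H2 => [/eqP->|->//]; by rewrite eqxx; move: N1 N2; rewrite !map_cat /= => n1 n2; rewrite ?n1 ?n2 ?orbT.
Qed.

Lemma key_L1 p s t e :
  size t = size s ->
  llt (s ++ [:: false]) (t ++ [:: e]) -> lle (r (t ++ [:: e])) (s ++ [:: false]) ->
  llt (map (xorb p) s ++ [:: false]) (t ++ [:: e])
  && lle (r (t ++ [:: e])) (map (xorb p) s ++ [:: false]).
Proof.
move=> st H1 H2; case: p; last by rewrite map_xorF H1 H2.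
rewrite map_xorT (_ : r s ++ [:: false] = r (s ++ [:: true])); last by rewrite map_cat.
have h1 : llt (r (s ++ [:: true])) (t ++ [:: e]).
  apply: (lt_le_trans (v := r (s ++ [:: false]))).
    by rewrite lt_r ?lt01 // !size_cat.
  by rewrite -(rK (t ++ _)) le_r ?size_map // !size_cat st.
have h2 : lle (r (t ++ [:: e])) (r (s ++ [:: true])).
  by rewrite le_r ?lt_le01 // !size_cat st.
by rewrite h1 h2.
Qed.

Lemma size_go a' p c : size (go a' p c) = size c * (size a').+1.
Proof. by elim: c p => //= x c IH p; rewrite size_cat /= IH size_map mulSn; lia. Qed.

Lemma go_lt a' p u v : llt (go a' p u) (go a' p v) = llt u v.
Proof.
elim: u v p => [|x u IH] [|y v] p //=.
- by elim: (map _ a') => //= z w ->; rewrite eqxx andbT; case: z.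
- rewrite lt_cat //= lt_irr eqxx /=; case: x; case: y => //=; by rewrite IH.
Qed.

Lemma go_TF a' t u v : a' = true :: t -> u != [::] -> v != [::] ->
  llt (go a' true u) (go a' false v).
Proof. by move=> -> ; case: u => // x u; case: v. Qed.

Lemma r_go a' p c : r (go a' p c) = go a' (~~ p) (r c).
Proof. by rewrite -map_xorT -go_xor. Qed.

Lemma take_go a' p c q : take (q * (size a').+1) (go a' p c) = go a' p (take q c).
Proof.
elim: c p q => [|x c IH] p [|q] //=; first by rewrite take0.
rewrite mulSn -cat_rcons take_cat size_rcons size_map ltnNge leq_addr /=.
by rewrite addKn IH cat_rcons.
Qed.

Lemma drop_go a' p c q :
  drop (q * (size a').+1) (go a' p c) = go a' (last p (take q c)) (drop q c).
Proof.
elim: c p q => [|x c IH] p [|q] //=; first by rewrite drop0.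
rewrite mulSn -cat_rcons drop_cat size_rcons size_map ltnNge leq_addr /=.
by rewrite addKn IH.
Qed.

Lemma dropl_cat (s1 s2 : word) n : n <= size s1 -> drop n (s1 ++ s2) = drop n s1 ++ s2.
Proof.
move=> h; rewrite drop_cat; case: ltnP => // h2.
have -> : n = size s1 by apply/eqP; rewrite eqn_leq h h2.
by rewrite subnn drop0 drop_size.
Qed.

Lemma take_cat_ge (A B : word) N : size A <= N -> take N (A ++ B) = A ++ take (N - size A) B.
Proof. by move=> h; rewrite take_cat ltnNge h. Qed.

Lemma go_le a' p u v : lle u v -> lle (go a' p u) (go a' p v).
Proof. by case/orP => [/eqP->|h]; rewrite /lle ?eqxx // go_lt h orbT. Qed.
Lemma closure a b0 : fundamental a -> fundamental b0 -> fundamental (wcomp a b0).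
Proof.
move=> ha hb0; idtac.
have [Sa Fa] := fundP ha; have [Sb Fb] := fundP hb0.
move: ha hb0 Sa Fa Sb Fb => /fund_shape [a' [ta [-> ea]]] /fund_shape [b' [tb [-> eb]]].
move=> Sa Fa Sb Fb.
have hb : rcons b' false = true :: rcons tb false by rewrite eb.
rewrite hb wcomp_go -hb.
set x := go a' false (rcons b' false).
set M := size a'.
have sx : size x = size (rcons b' false) * M.+1 by rewrite size_go.
have M1 : 1 <= M by rewrite /M ea.
have sa : size (rcons a' false) = M.+1 by rewrite size_rcons.
rewrite sa in Fa Sa.
apply: fundI; first by rewrite sx; move: Sb; nia.
move=> i /andP[i0 ix]; rewrite /Cond.
rewrite sx in ix *.
have hi := divn_eq i M.+1.
set q := i %/ M.+1 in hi; set j := i %% M.+1 in hi.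
have jm : j < M.+1 by rewrite ltn_mod.
have qn : q < size (rcons b' false) by move: ix hi jm; nia.
set p := last false (take q (rcons b' false)).
have hD : drop (q * M.+1) x = go a' p (drop q (rcons b' false)) by rewrite drop_go.
have sU : size (drop q (rcons b' false)) = size (rcons b' false) - q by rewrite size_drop.
set B := rcons b' false in Sb Fb hb x sx ix qn p hD sU *.
set n := size B in Sb Fb sx ix qn sU *.
case: (posnP j) => [j0|jpos].
  have q0 : 0 < q by move: i0; rewrite hi j0 addn0; nia.
  rewrite hi j0 addn0 hD -mulnBl take_go.
  have := Fb q; rewrite q0 qn /Cond => /(_ isT) /andP[h1 h2].
  have U0 : drop q B != [::] by rewrite -size_eq0 sU; lia.
  have V0 : take (n - q) B != [::] by rewrite -size_eq0 size_takel ?leq_subr //; lia.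
  rewrite r_go /=; clear hD; case: p.
    by apply/andP; split; [exact: go_TF ea U0 V0 | exact: go_le].
  have V1 : r (take (n - q) B) != [::] by rewrite -size_eq0 size_map size_eq0.
  by rewrite go_lt h1 /lle (go_TF ea V1 U0) orbT.
have jM : j <= M by lia.
set s := drop j a'; set t := take (M - j) a'; set e := nth false a' (M - j).
set s' := drop (M - j).+1 a'; set T2 := take j a'.
have ea1 : take (M - j).+1 a' = t ++ [:: e] by rewrite (take_nth false) ?cats1 //; rewrite -/M; lia.
have ea2 : a' = (t ++ [:: e]) ++ s' by rewrite -ea1 cat_take_drop.
have ea3 : a' = T2 ++ s by rewrite cat_take_drop.
have st : size t = size s by rewrite size_take size_drop -/M; case: ltnP; lia.
have sT : size T2 = (size s').+1 by rewrite size_take size_drop -/M; case: ltnP; lia.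
have := Fa j; rewrite jpos jm /Cond => /(_ isT) /andP[].
rewrite sa drop_rcons // -!cats1 takel_cat -/M ?subSn //; last by lia.
rewrite ea1 => H1 H2.
have := Fa (M.+1 - j); rewrite /Cond => /(_ ltac:(lia)) /andP[_].
rewrite sa drop_rcons -/M; last by lia.
rewrite -!cats1 takel_cat -/M; last by lia.
rewrite (_ : M.+1 - (M.+1 - j) = j); last by lia.
rewrite (_ : M.+1 - j = (M - j).+1); last by lia.
rewrite -/s' -/T2 => H4.
rewrite hi addnC -drop_drop hD.
have hx : x = ((t ++ [:: e]) ++ (s' ++ [:: true])) ++ go a' true (rcons tb false).
  by rewrite /x hb /= map_xorF {1}ea2 -!catA.
have nb : n = (size b').+1 by rewrite /n /B size_rcons.
have dq : drop q B = rcons (drop q b') false by rewrite /B drop_rcons //; lia.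
rewrite dq; rewrite dq size_rcons in sU.
have sj : size (map (xorb p) a') = M by rewrite size_map.
case ED: (drop q b') sU => [|u1 D'] /= sU.
  rewrite dropl_cat ?sj // -map_drop.
  rewrite (_ : n * M.+1 - (j + q * M.+1) = (M - j).+1); last by nia.
  rewrite /x hb /= map_xorF takel_cat; last by rewrite -/M; lia.
  rewrite ea1; exact: key_L1.
have [u2 [W EW]] : exists u2 W, rcons D' false = u2 :: W by case: (D') => [|y w]; do 2 eexists.
rewrite EW /= dropl_cat ?sj // -map_drop.
rewrite (_ : map (xorb u1) a' = map (xorb u1) T2 ++ map (xorb u1) s); last by rewrite {1}ea3 map_cat.
rewrite -catA.
rewrite hx take_cat_ge; last first.
  rewrite catA -ea2 size_cat /= -/M.
  have -> : n = q + (size D').+2 by lia.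
  rewrite mulnDl; nia.
rewrite -catA.
case/andP: (@key_L2 p u1 s t e s' T2 (map (xorb u1) s ++ u2 :: go a' u2 W) (take (n * M.+1 - (j + q * M.+1) - size ((t ++ [:: e]) ++ s' ++ [:: true])) (go a' true (rcons tb false))) st sT H1 H2 H4) => -> h.
by rewrite /lle h orbT.
Qed.

Theorem proposition2p11 :
  (forall a b : word, fundamental a -> fundamental b -> fundamental (wcomp a b)) /\
  (forall a b c : word, fundamental a -> fundamental b -> fundamental c ->
     wcomp (wcomp a b) c = wcomp a (wcomp b c)) /\
  (exists a b : word, fundamental a /\ fundamental b /\ wcomp a b <> wcomp b a).
Proof.
split; first exact: closure.
split; first exact: assoc_part.
exact: noncomm.
Qed.
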